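(* Let $g$ be an $n$-variable Boolean function and $b\in\mathbb{F}_2$. Let $g_b$ be the $(n+1)$-variable Boolean function $$g_b(X_{n+1},X_n,\ldots,X_1)=(1\oplus X_{n+1})\,g(X_n,\ldots,X_1)\oplus X_{n+1}\bigl(b\oplus g(1\oplus X_n,\ldots,1\oplus X_1)\bigr).$$ Then: (1) for every $\bm{\beta}=(a,\bm{\alpha})\in\mathbb{F}_2^{n+1}$ with $a\in\mathbb{F}_2$ (the coordinate corresponding to $X_{n+1}$) and $\bm{\alpha}\in\mathbb{F}_2^n$, $$W_{g_b}(\bm{\beta})=\frac{1+(-1)^{b+\mathrm{wt}(\bm{\beta})}}{2}\,W_g(\bm{\alpha});$$ (2) $H_\infty(g_b)=H_\infty(g)$; (3) $\mathrm{Inf}(g_b)=\mathrm{Inf}(g)+\epsilon_b(g)$, where $\epsilon_b(g)=\sum_{\bm{\alpha}\in\mathbb{F}_2^n,\ \mathrm{wt}(\bm{\alpha})\not\equiv b \pmod 2}W_g^2(\bm{\alpha})$.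
   Context: Boolean functions are maps $\mathbb{F}_2^n\to\mathbb{F}_2$, with an $n$-variable function written $g(X_n,\ldots,X_1)$ and vectors ordered accordingly. Walsh transform: $W_f(\bm{\alpha})=2^{-n}\sum_{\mathbf{x}}(-1)^{f(\mathbf{x})\oplus\langle\mathbf{x},\bm{\alpha}\rangle}$, $\langle\mathbf{x},\bm{\alpha}\rangle=\bigoplus_ix_i\alpha_i$. Logarithms base 2. Min-entropy: $H_\infty(f)=\min_{\bm{\alpha}:W_f^2(\bm{\alpha})\ne0}\log(1/W_f^2(\bm{\alpha}))$. Influence: $\mathrm{Inf}(f)=\sum_{i=1}^n\Pr_{\mathbf{x}}[f(\mathbf{x})\ne f(\mathbf{x}\oplus\mathbf{e}_i)]=\sum_{\bm{\alpha}}\mathrm{wt}(\bm{\alpha})W_f^2(\bm{\alpha})$. *)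

(* Defs.v *)
From HB Require Import structures.
From mathcomp Require Import all_boot all_order all_algebra.
From mathcomp Require Import reals ereal exp.
Set Implicit Arguments. Unset Strict Implicit. Unset Printing Implicit Defensive.
Import Order.TTheory GRing.Theory Num.Theory.
Local Open Scope ring_scope.

(* Vectors of F_2^n: x : {ffun 'I_n -> bool}; coordinate i (0-based) is X_{i+1}. *)
Definition vec (n : nat) := {ffun 'I_n -> bool}.
Definition bfun (n : nat) := vec n -> bool.

Definition wt n (x : vec n) : nat := #|[set i | x i]|.

Definition dotb n (x a : vec n) : bool := \big[addb/false]_(i < n) (x i && a i).

Definition walsh (R : realType) n (f : bfun n) (a : vec n) : R :=
  (2 ^+ n)^-1 * \sum_(x : vec n) (-1) ^+ (f x (+) dotb x a).

Definition log2 (R : realType) (x : R) : R := ln x / ln 2.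

(* Min-entropy: min over a with W_f(a)^2 != 0 of log(1/W_f(a)^2)
   (as an extended real, +oo if the set is empty, which never happens). *)
Definition Hinf (R : realType) n (f : bfun n) : \bar R :=
  \big[Order.min/+oo%E]_(a : vec n | walsh R f a ^+ 2 != 0)
     ((log2 ((walsh R f a ^+ 2)^-1))%:E).

Definition flip n (x : vec n) (i : 'I_n) : vec n := [ffun j => x j (+) (j == i)].

Definition Inf (R : realType) n (f : bfun n) : R :=
  \sum_(i < n) (#|[set x : vec n | f x != f (flip x i)]|%:R / 2 ^+ n).

Definition epsb (R : realType) n (b : bool) (g : bfun n) : R :=
  \sum_(a : vec n | odd (wt a) != b) walsh R g a ^+ 2.

Definition low n (x : vec n.+1) : vec n := [ffun i : 'I_n => x (widen_ord (leqnSn n) i)].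
Definition compl n (x : vec n) : vec n := [ffun i => ~~ x i].

Definition gb n (b : bool) (g : bfun n) : bfun n.+1 := fun x =>
  ((~~ x ord_max) && g (low x)) (+) (x ord_max && (b (+) g (compl (low x)))).

(* Main.v *)
Require Import Defs.
From HB Require Import structures.
From mathcomp Require Import all_boot all_order all_algebra.
From mathcomp Require Import reals ereal exp.
From mathcomp Require Import ring lra.
Import Order.TTheory GRing.Theory Num.Theory.
Local Open Scope ring_scope.
Set Implicit Arguments. Unset Strict Implicit.

Section Aux.
Variable n : nat.

Definition ext (a : bool) (y : vec n) : vec n.+1 :=
  [ffun i : 'I_n.+1 => if unlift ord_max i is Some j then y j else a].

Lemma ext_max a y : ext a y ord_max = a.
Proof. by rewrite ffunE unlift_none. Qed.

Lemma widen_lift (j : 'I_n) : widen_ord (leqnSn n) j = lift ord_max j.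
Proof. by apply: val_inj; rewrite /= /bump leqNgt ltn_ord. Qed.

Lemma low_ext a y : low (ext a y) = y.
Proof. by apply/ffunP=> j; rewrite !ffunE widen_lift liftK. Qed.

Lemma ext_low (x : vec n.+1) : ext (x ord_max) (low x) = x.
Proof.
apply/ffunP=> i; rewrite ffunE.
case: unliftP => [j ->|->] //.
by rewrite ffunE widen_lift.
Qed.

Definition par m (x : vec m) : bool := \big[addb/false]_(i < m) x i.

Lemma odd_wt m (x : vec m) : odd (wt x) = par x.
Proof.
rewrite /wt -sum1_card big_mkcond /=.
rewrite (big_morph odd oddD (erefl : odd 0 = false)) /par.
by apply: eq_bigr => i _; rewrite inE; case: (x i).
Qed.

Lemma par_low (x : vec n.+1) : par x = par (low x) (+) x ord_max.
Proof. by rewrite /par big_ord_recr /=; congr (_ (+) _); apply: eq_bigr=> i _; rewrite ffunE. Qed.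

Lemma dotb_low (x a : vec n.+1) :
  dotb x a = dotb (low x) (low a) (+) (x ord_max && a ord_max).
Proof. by rewrite /dotb big_ord_recr /=; congr (_ (+) _); apply: eq_bigr=> i _; rewrite !ffunE. Qed.

Lemma dotb_compl (y a : vec n) : dotb (compl y) a = dotb y a (+) par a.
Proof.
rewrite /dotb /par -big_split /=; apply: eq_bigr => i _.
by rewrite ffunE; case: (y i); case: (a i).
Qed.

Lemma complK : involutive (@compl n).
Proof. by move=> y; apply/ffunP=> i; rewrite !ffunE negbK. Qed.

Lemma flipK (i : 'I_n) : involutive (fun y : vec n => flip y i).
Proof. by move=> y; apply/ffunP=> j; rewrite !ffunE -addbA addbb addbF. Qed.

Lemma compl_flip (y : vec n) i : compl (flip y i) = flip (compl y) i.
Proof. by apply/ffunP=> j; rewrite !ffunE addNb. Qed.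

Lemma flip_ext_w a y (i : 'I_n) : flip (ext a y) (widen_ord (leqnSn n) i) = ext a (flip y i).
Proof.
apply/ffunP=> k; rewrite !ffunE; case: unliftP => [j ->|->].
  by rewrite ffunE !widen_lift (inj_eq (@lift_inj _ _)).
by rewrite widen_lift (negbTE (neq_lift _ _)) addbF.
Qed.

Lemma flip_ext_max a y : flip (ext a y) ord_max = ext (~~ a) y.
Proof.
apply/ffunP=> k; rewrite !ffunE; case: unliftP => [j ->|->].
  by rewrite eq_sym (negbTE (neq_lift _ _)) addbF.
by rewrite eqxx addbT.
Qed.

Lemma sum_split (V : nmodType) (h : vec n.+1 -> V) :
  \sum_(x : vec n.+1) h x = \sum_(y : vec n) (h (ext false y) + h (ext true y)).
Proof.
rewrite big_split /= (bigID (fun x : vec n.+1 => x ord_max)) /= addrC.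
have E a : \sum_(x : vec n.+1 | x ord_max == a) h x = \sum_(y : vec n) h (ext a y).
  rewrite (reindex_onto (ext a) (@low n)); last by move=> x /eqP <-; rewrite ext_low.
  by apply: eq_bigl => y; rewrite low_ext ext_max !eqxx.
by rewrite -!E; congr (_ + _); apply: eq_bigl => x; case: (x ord_max).
Qed.

End Aux.

Section Walsh.
Variable R : realType.
Local Notation s b := ((-1 : R) ^+ (b : bool)).

Definition S n (g : bfun n) (a : vec n) : R := \sum_(y : vec n) s (g y (+) dotb y a).

Lemma walshE n (g : bfun n) a : walsh R g a = (2 ^+ n)^-1 * S g a.
Proof. by []. Qed.

Lemma S_gb n (g : bfun n) b (be : vec n.+1) :
  S (gb b g) be = S g (low be) * (1 + s (b (+) be ord_max (+) par (low be))).
Proof.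
rewrite /S sum_split mulrDr mulr1 big_split /=; congr (_ + _).
  apply: eq_bigr => y _; rewrite /gb ext_max low_ext dotb_low low_ext ext_max /=.
  by rewrite !addbF.
rewrite (reindex_inj (can_inj (@complK n))) big_distrl /=.
apply: eq_bigr => y _; rewrite /gb ext_max low_ext dotb_low low_ext ext_max /=.
rewrite complK dotb_compl -!signr_addb; congr (_ ^+ _).
by case: (b); case: (g y); case: (be ord_max); case: (dotb y (low be)); case: (par (low be)).
Qed.

Lemma part1 n (g : bfun n) b (be : vec n.+1) :
  walsh R (gb b g) be = (1 + (-1) ^+ (b + wt be)) / 2 * walsh R g (low be).
Proof.
rewrite !walshE S_gb -signr_odd oddD odd_wt par_low.
have -> : odd b = b by case: b.
rewrite exprS invfM.
have -> : b (+) (par (low be) (+) be ord_max) = b (+) be ord_max (+) par (low be).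
  by case: b; case: (par _); case: (be ord_max).
set c := _ (+) _; set t := S _ _; set u := (2 ^+ n)^-1.
rewrite /=; lra.
Qed.
End Walsh.

Section Hinf.
Variable R : realType.

Lemma walsh_gb_if n (g : bfun n) b (be : vec n.+1) :
  walsh R (gb b g) be =
  if b (+) be ord_max (+) par (low be) then 0 else walsh R g (low be).
Proof.
rewrite !walshE S_gb exprS invfM.
case: (b (+) _ (+) _) => /=; first by rewrite expr1 addrN mulr0 mulr0.
rewrite expr0; set t := S _ _; set u := (2 ^+ n)^-1; lra.
Qed.

Lemma part2 n (g : bfun n) b : Hinf R (gb b g) = Hinf R g.
Proof.
apply: le_anti; apply/andP; split.
  rewrite /Hinf; apply: le_bigmin => [|a Ha]; first exact: leey.
  have E : b (+) (b (+) par a) (+) par a = false by case: b; case: (par a).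
  apply: (bigmin_inf (ext (b (+) par a) a)).
    by rewrite walsh_gb_if ext_max low_ext E.
  by rewrite walsh_gb_if ext_max low_ext E.
rewrite /Hinf; apply: le_bigmin => [|be]; first exact: leey.
rewrite walsh_gb_if; case: (b (+) be ord_max (+) par (low be)).
  by rewrite expr0n /= eqxx.
by move=> Hb; apply: (bigmin_inf (low be)).
Qed.
End Hinf.

Definition zv m : vec m := [ffun _ => false].
Definition vadd m (y z : vec m) : vec m := [ffun i => y i (+) z i].

Lemma dotb_flip m (w a : vec m) i : dotb w (flip a i) = dotb w a (+) w i.
Proof.
rewrite /dotb.
under eq_bigr => j _ do rewrite ffunE andb_addr.
rewrite big_split /=; congr (_ (+) _).
rewrite (bigD1 i) //= eqxx andbT big1 ?addbF // => j /negbTE ->.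
by rewrite andbF.
Qed.

Lemma dotb_vadd m (y z a : vec m) : dotb (vadd y z) a = dotb y a (+) dotb z a.
Proof.
rewrite /dotb -big_split /=; apply: eq_bigr => j _.
by rewrite ffunE andb_addl.
Qed.

Lemma dotb_zv m (a : vec m) : dotb (zv m) a = false.
Proof. by rewrite /dotb big1 // => j _; rewrite ffunE. Qed.

Lemma card_vec m : #|{: vec m}| = (2 ^ m)%N.
Proof. by rewrite card_ffun card_bool card_ord. Qed.

Lemma vadd_zv m (y z c : vec m) : (vadd (vadd y z) c == zv m) = (z == vadd y c).
Proof.
apply/eqP/eqP => [H|->].
  apply/ffunP => i; move/ffunP: H => /(_ i); rewrite !ffunE.
  by case: (y i); case: (z i); case: (c i).
by apply/ffunP => i; rewrite !ffunE; case: (y i); case: (c i).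
Qed.

Section Fourier.
Variable R : realType.
Local Notation s b := ((-1 : R) ^+ (b : bool)).

Lemma orth m (w : vec m) :
  \sum_(a : vec m) s (dotb w a) = if w == zv m then 2 ^+ m else 0.
Proof.
case: eqP => [->|Hw].
  under eq_bigr => a _ do rewrite dotb_zv expr0.
  by rewrite sumr_const card_vec natrX.
case: (pickP (fun i => w i)) => [i wi|H]; last first.
  by exfalso; apply: Hw; apply/ffunP => i; rewrite ffunE; apply: H.
set S := \sum_a _.
have E : S = - S.
  rewrite {1}/S (reindex_inj (can_inj (flipK i))) /= /S -sumrN.
  apply: eq_bigr => a _; rewrite dotb_flip wi addbT.
  by case: (dotb w a); rewrite /= ?expr1 ?expr0 ?opprK.
lra.
Qed.

Lemma fourier m (g : bfun m) (c : vec m) :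
  \sum_(a : vec m) s (dotb c a) * S R g a ^+ 2
  = 2 ^+ m * \sum_(y : vec m) s (g y (+) g (vadd y c)).
Proof.
have E a : s (dotb c a) * S R g a ^+ 2 =
    \sum_(y : vec m) \sum_(z : vec m)
      s (g y (+) g z) * s (dotb (vadd (vadd y z) c) a).
  rewrite expr2 /S big_distrl /= big_distrr /=; apply: eq_bigr => y _.
  rewrite big_distrr /= big_distrr /=; apply: eq_bigr => z _.
  rewrite -!signr_addb; congr (_ ^+ _).
  rewrite !dotb_vadd.
  by case: (g y); case: (g z); case: (dotb c a); case: (dotb y a); case: (dotb z a).
under eq_bigr => a _ do rewrite E.
rewrite exchange_big /= big_distrr /=; apply: eq_bigr => y _.
rewrite exchange_big /=.
under eq_bigr => z _ do rewrite -big_distrr /= orth vadd_zv.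
rewrite (bigD1 (vadd y c)) // eqxx big1 => [|z /andP[_ /negbTE ->]]; last by rewrite mulr0.
exact: (etrans (addr0 _) (mulrC _ _)).
Qed.
End Fourier.

Definition ones m : vec m := [ffun _ => true].

Lemma dotb_ones m (a : vec m) : dotb (ones m) a = par a.
Proof. by rewrite /dotb /par; apply: eq_bigr => i _; rewrite ffunE. Qed.

Lemma vadd_ones m (y : vec m) : vadd y (ones m) = compl y.
Proof. by apply/ffunP => i; rewrite !ffunE addbT. Qed.

Lemma vaddv0 m (y : vec m) : vadd y (zv m) = y.
Proof. by apply/ffunP => i; rewrite !ffunE addbF. Qed.

Lemma card_sum m (P : pred (vec m)) : #|[set x | P x]| = (\sum_x (P x : nat))%N.
Proof.
rewrite -sum1_card big_mkcond; apply: eq_bigr => x _; rewrite inE.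
by case: (P x).
Qed.

Section Eps.
Variable R : realType.
Local Notation s b := ((-1 : R) ^+ (b : bool)).

Lemma epsE n (g : bfun n) b :
  epsb R b g = (\sum_y ((g y (+) g (compl y) (+) b : bool) : nat))%:R / 2 ^+ n.
Proof.
have F0 := fourier R g (zv n).
have F1 : \sum_a s (dotb (ones n) a) * S R g a ^+ 2
   = 2 ^+ n * \sum_y s (g y (+) g (compl y)).
  by rewrite fourier; under eq_bigr => y _ do rewrite vadd_ones.
have P0 : \sum_a s (dotb (zv n) a) * S R g a ^+ 2 = \sum_a S R g a ^+ 2.
  by apply: eq_bigr => a _; rewrite dotb_zv expr0 mul1r.
have Q0 : \sum_y s (g y (+) g (vadd y (zv n))) = 2 ^+ n.
  under eq_bigr => y _ do rewrite vaddv0 addbb expr0.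
  by rewrite sumr_const card_vec natrX.
set k := (2 ^+ n)^-1 : R.
rewrite /epsb.
transitivity (\sum_a ((1 - s b * s (dotb (ones n) a)) / 2 * (k ^+ 2 * S R g a ^+ 2))).
  rewrite big_mkcond; apply: eq_bigr => a _; rewrite odd_wt dotb_ones walshE exprMn.
  by case: b; case: (par a) => /=; rewrite ?expr0 ?expr1 /k; lra.
have -> : \sum_a ((1 - s b * s (dotb (ones n) a)) / 2 * (k ^+ 2 * S R g a ^+ 2))
   = k ^+ 2 / 2 * \sum_a S R g a ^+ 2
     - k ^+ 2 / 2 * s b * \sum_a s (dotb (ones n) a) * S R g a ^+ 2.
  rewrite !big_distrr -sumrB; apply: eq_bigr => a _ /=; ring.
rewrite -P0 F0 F1 Q0.
rewrite natr_sum.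
have -> : \sum_y (((g y (+) g (compl y) (+) b : bool) : nat)%:R : R)
  = \sum_y ((1 - s b * s (g y (+) g (compl y))) / 2).
  apply: eq_bigr => y _.
  by case: b; case: (g y (+) g (compl y)) => /=; rewrite ?expr0 ?expr1; lra.
rewrite -big_distrl /= sumrB sumr_const card_vec -big_distrr /=.
have N : (2 ^+ n : R) != 0 by rewrite expf_neq0 // pnatr_eq0.
rewrite /k; set Q := \sum_y _.
rewrite -natrX; rewrite natrX.
field; exact: N.
Qed.
End Eps.

Lemma cnt_w n (g : bfun n) b (i : 'I_n) :
  #|[set x | gb b g x != gb b g (flip x (widen_ord (leqnSn n) i))]|
  = (2 * #|[set y | g y != g (flip y i)]|)%N.
Proof.
rewrite !card_sum sum_split big_split mul2n -addnn; congr (_ + _)%N.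
  apply: eq_bigr => y _; rewrite flip_ext_w /gb !ext_max !low_ext.
  by rewrite /= !addbF.
rewrite (reindex_inj (can_inj (@complK n))).
apply: eq_bigr => y _; rewrite flip_ext_w /gb !ext_max !low_ext compl_flip !complK.
by case: b; case: (g y); case: (g (flip y i)).
Qed.

Lemma cnt_max n (g : bfun n) b :
  #|[set x | gb b g x != gb b g (flip x ord_max)]|
  = (2 * \sum_y ((g y (+) g (compl y) (+) b : bool) : nat))%N.
Proof.
rewrite !card_sum sum_split mul2n -addnn -big_split; apply: eq_bigr => y _.
rewrite !flip_ext_max /gb !ext_max !low_ext.
by case: b; case: (g y); case: (g (compl y)).
Qed.

Lemma part3 (R : realType) n (g : bfun n) b :
  Inf R (gb b g) = Inf R g + epsb R b g.
Proof.
rewrite /Inf big_ord_recr epsE cnt_max; congr (_ + _).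
  apply: eq_bigr => i _; rewrite cnt_w natrM exprS.
  have N : (2 ^+ n : R) != 0 by rewrite expf_neq0 // pnatr_eq0.
  by field.
rewrite natrM exprS.
have N : (2 ^+ n : R) != 0 by rewrite expf_neq0 // pnatr_eq0.
by field.
Qed.

Theorem proposition2 (R : realType) (n : nat) (g : bfun n) (b : bool) :
  (forall beta : vec n.+1,
     walsh R (gb b g) beta
     = (1 + (-1) ^+ (b + wt beta)) / 2 * walsh R g (low beta))
  /\ Hinf R (gb b g) = Hinf R g
  /\ Inf R (gb b g) = Inf R g + epsb R b g.
Proof.
split; first exact: part1.
split; [exact: part2 | exact: part3].
Qed.
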